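(* Let $p$ be a prime with $p\mid n$, $e\in\mathbb{N}$, and let $\{R_j\}_{j\in J}$ be a system of representatives of the right cosets in $\Gamma_0(p^{e+1}n)\backslash\Gamma_0(pn)$. Then $\{B_pR_jB_p^{-1}\}_{j\in J}$ is a system of representatives of the right cosets in $\Gamma_0(p^en)\backslash\Gamma_0(n)$.
   Context: $B_p=\begin{pmatrix}p&0\\0&1\end{pmatrix}$; $\Gamma_0(N)=\{\begin{pmatrix}a&b\\c&d\end{pmatrix}\in SL(2,\mathbb{Z}):N\mid c\}$. A system of representatives $\{R_j\}$ of the right cosets in $H\backslash G$ means $G=\bigsqcup_jHR_j$ (disjoint union). For $g\in\Gamma_0(pn)$, $B_pgB_p^{-1}\in SL(2,\mathbb{Z})$. *)

(* Defs.v *)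
(* Matrices over rat so that B_p^{-1} makes sense. *)
From mathcomp Require Import all_boot all_order all_algebra.
Set Implicit Arguments. Unset Strict Implicit. Unset Printing Implicit Defensive.
Import Order.TTheory GRing.Theory Num.Theory.
Local Open Scope ring_scope.

Definition inSL2Z (A : 'M[rat]_2) : Prop :=
  (forall i j, A i j \is a Num.int) /\ \det A = 1.

Definition Gamma0 (N : nat) (A : 'M[rat]_2) : Prop :=
  inSL2Z A /\ exists k : int, A 1 0 = (N%:Z * k)%:~R.

Definition Bp (p : nat) : 'M[rat]_2 :=
  \matrix_(i < 2, j < 2) (if i == j then (if i == 0 then p%:R else 1) else 0).

Definition right_coset_reps (H G : 'M[rat]_2 -> Prop) (J : Type)
    (R : J -> 'M[rat]_2) : Prop :=
  (forall g, G g <-> exists j, exists h, H h /\ g = h *m R j) /\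
  (forall i j g, (exists h, H h /\ g = h *m R i) ->
                 (exists h, H h /\ g = h *m R j) -> i = j).

(* Main.v *)
Require Import Defs.
From mathcomp Require Import all_boot all_order all_algebra.
From mathcomp Require Import ring.
Set Implicit Arguments. Unset Strict Implicit. Unset Printing Implicit Defensive.
Import Order.TTheory GRing.Theory Num.Theory.
Local Open Scope ring_scope.

Definition M2 (a b c d : int) : 'M[rat]_2 :=
  \matrix_(i < 2, j < 2)
    (if i == 0 then (if j == 0 then a else b) else (if j == 0 then c else d))%:~R.

Lemma ord2 (i : 'I_2) : i = 0 \/ i = 1.
Proof. case: i => [[|[|i]] Hi]; [left|right|by []]; exact/val_inj. Qed.

Lemma mx2_eq (A B : 'M[rat]_2) : A 0 0 = B 0 0 -> A 0 1 = B 0 1 ->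
  A 1 0 = B 1 0 -> A 1 1 = B 1 1 -> A = B.
Proof.
move=> h1 h2 h3 h4; apply/matrixP => i j.
by case: (ord2 i) => ->; case: (ord2 j) => ->.
Qed.

Lemma mulM2 a b c d a' b' c' d' : M2 a b c d *m M2 a' b' c' d' =
  M2 (a*a'+b*c') (a*b'+b*d') (c*a'+d*c') (c*b'+d*d').
Proof.
apply: mx2_eq; rewrite !mxE !big_ord_recl big_ord0 !mxE /= ;
 rewrite ?(intrD, intrM) ?addr0 //.
Qed.
Lemma det2 (A : 'M[rat]_2) : \det A = A 0 0 * A 1 1 - A 0 1 * A 1 0.
Proof.
rewrite (expand_det_row _ 0) !big_ord_recl big_ord0 /cofactor !det_mx11 !mxE /=.
have l1 : forall j : 'I_1, lift (0 : 'I_2) j = 1 by move=> j; apply/val_inj; rewrite /= ord1.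
have l0 : lift (lift ord0 ord0 : 'I_2) (0 : 'I_1) = 0 by apply/val_inj.
have l2 : (lift ord0 ord0 : 'I_2) = 1 by apply/val_inj.
have l3 : (ord0 : 'I_2) = 0 by apply/val_inj.
rewrite !l1 ?l0 ?l2 ?l3 add0n expr0 /bump /= expr1 mul1r mulN1r addr0 mulrN.
have l4 : lift (1 : 'I_2) (0 : 'I_1) = 0 by apply/val_inj.
by rewrite l4. Qed.


Lemma detM2 a b c d : \det (M2 a b c d) = (a*d - b*c)%:~R.
Proof. by rewrite det2 !mxE /= intrB !intrM. Qed.

Lemma M2_1 : M2 1 0 0 1 = 1%:M.
Proof. by apply: mx2_eq; rewrite !mxE. Qed.

Lemma unitM2 a b c d : a*d - b*c = 1 -> M2 a b c d \in unitmx.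
Proof. by move=> h; rewrite unitmxE detM2 h unitr1. Qed.

Lemma invM2 a b c d : a*d - b*c = 1 -> invmx (M2 a b c d) = M2 d (-b) (-c) a.
Proof.
move=> h; have U := unitM2 h.
have E : M2 a b c d *m M2 d (-b) (-c) a = 1%:M.
  rewrite mulM2 -M2_1; congr M2; first [ring | rewrite -h; ring].
by rewrite -[RHS](mulKmx U) E mulmx1.
Qed.

Lemma inSL2Z_M2 (A : 'M[rat]_2) : (forall i j, A i j \is a Num.int) /\ \det A = 1 ->
  exists a b c d, A = M2 a b c d /\ a*d - b*c = 1.
Proof.
move=> [hi hd].
have [a ha] := intrP (hi 0 0); have [b hb] := intrP (hi 0 1).
have [c hc] := intrP (hi 1 0); have [d hd'] := intrP (hi 1 1).
have EA : A = M2 a b c d by apply: mx2_eq; rewrite !mxE.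
exists a, b, c, d; split => //.
by apply: (@intr_inj rat); move: hd; rewrite EA detM2.
Qed.

Lemma Gamma0_M2 N a b c d : Gamma0 N (M2 a b c d) <->
  a*d - b*c = 1 /\ exists k : int, c = N%:Z * k.
Proof.
split.
  move=> [[hi hd] [k hk]]; split.
    by apply: (@intr_inj rat); rewrite -detM2 hd.
  by exists k; apply: (@intr_inj rat); rewrite -hk mxE.
move=> [h [k hk]]; split; last by exists k; rewrite mxE /= hk.
split; last by rewrite detM2 h.
by move=> i j; rewrite mxE; case: ifP => _; case: ifP => _; exact: intr_int.
Qed.

Lemma Gamma0_ex N A : Gamma0 N A -> exists a b c d k,
  A = M2 a b c d /\ a*d - b*c = 1 /\ c = N%:Z * k.
Proof.
move=> G; have [a [b [c [d [EA _]]]]] := inSL2Z_M2 G.1.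
move: G; rewrite EA => /Gamma0_M2 [h [k hk]].
by exists a, b, c, d, k.
Qed.

Lemma Gamma0_mul N A B : Gamma0 N A -> Gamma0 N B -> Gamma0 N (A *m B).
Proof.
move=> /Gamma0_ex [a [b [c [d [k [-> [h hc]]]]]]]; subst c.
move=> /Gamma0_ex [a' [b' [c' [d' [k' [-> [h' hc']]]]]]]; subst c'.
rewrite mulM2; apply/Gamma0_M2; split.
  transitivity ((a*d - b*(N%:Z * k)) * (a'*d' - b'*(N%:Z * k'))); first ring.
  by rewrite h h' mulr1.
by exists (k * a' + d * k'); ring.
Qed.

Lemma Gamma0_inv N A : Gamma0 N A -> Gamma0 N (invmx A).
Proof.
move=> /Gamma0_ex [a [b [c [d [k [-> [h hc]]]]]]]; subst c.
rewrite invM2 //; apply/Gamma0_M2; split.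
  rewrite -h; ring.
by exists (- k); ring.
Qed.

Lemma Gamma0_unit N A : Gamma0 N A -> A \in unitmx.
Proof. by move=> /Gamma0_ex [a [b [c [d [k [-> [h _]]]]]]]; exact: unitM2. Qed.

Lemma Gamma0_1 N : Gamma0 N 1%:M.
Proof. rewrite -M2_1; apply/Gamma0_M2; split; first ring. by exists 0; ring. Qed.

Lemma Bp_M2 p : Bp p = M2 p%:Z 0 0 1.
Proof. by apply: mx2_eq; rewrite !mxE. Qed.

Lemma Bp_unit p : (0 < p)%N -> Bp p \in unitmx.
Proof.
move=> hp; rewrite unitmxE Bp_M2 detM2 unitfE mulr1 mulr0 subr0 intr_eq0.
by rewrite -lt0n.
Qed.

Lemma phiM2 p a b c d : (0 < p)%N ->
  Bp p *m M2 a b (p%:Z * c) d *m invmx (Bp p) = M2 a (p%:Z * b) c d.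
Proof.
move=> hp.
have -> : Bp p *m M2 a b (p%:Z * c) d = M2 a (p%:Z * b) c d *m Bp p.
  by rewrite Bp_M2 !mulM2; congr M2; ring.
by rewrite mulmxK // Bp_unit.
Qed.

Lemma Gamma0_weak m N X : Gamma0 (m * N) X -> Gamma0 N X.
Proof.
move=> /Gamma0_ex [a [b [c [d [k [-> [h hc]]]]]]]; subst c.
apply/Gamma0_M2; split => //; exists (m%:Z * k); rewrite PoszM; ring.
Qed.

Theorem mainTheorem10 (p n e : nat) (J : Type) (R : J -> 'M[rat]_2) :
  prime p -> (p %| n)%N ->
  right_coset_reps (Gamma0 (p ^ e.+1 * n)) (Gamma0 (p * n)) R ->
  right_coset_reps (Gamma0 (p ^ e * n)) (Gamma0 n)
    (fun j => Bp p *m R j *m invmx (Bp p)).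
Proof.
move=> pr pn [Hcov Hdisj].
have p0 : (0 < p)%N := prime_gt0 pr.
have [n' hn] := dvdnP pn.
have hnz : n%:Z = n'%:Z * p%:Z by rewrite hn PoszM.
have BU := Bp_unit p0.
set phi := fun X => Bp p *m X *m invmx (Bp p).
have phiM : forall X Y, phi (X *m Y) = phi X *m phi Y.
  by move=> X Y; rewrite /phi !mulmxA mulmxKV.
have phiG : forall M X, Gamma0 (p * M) X -> Gamma0 M (phi X).
  move=> M X /Gamma0_ex [a [b [c [d [k [-> [h hc]]]]]]]; subst c.
  rewrite PoszM -mulrA /phi phiM2 //; apply/Gamma0_M2; split; last by exists k.
  by rewrite -h; ring.
have RG : forall j, Gamma0 (p * n) (R j).
  move=> j; apply/Hcov; exists j, 1%:M; split; [exact: Gamma0_1 | by rewrite mul1mx].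
have G_pe : forall X, Gamma0 (p ^ e.+1 * n) X -> Gamma0 (p * (p ^ e * n)) X.
  by move=> X; rewrite expnS -mulnA.
split.
- move=> g; split.
  + move=> /Gamma0_ex [a [b [c [d [k [Eg [h hc]]]]]]]; subst c.
    set u := b * a.
    pose g'' := M2 (a - u * (n%:Z * k)) (- (b * b * n'%:Z * k)) (p%:Z * (n%:Z * k)) d.
    have Gg'' : Gamma0 (p * n) g''.
      apply/Gamma0_M2; split; last by exists k; rewrite PoszM; ring.
      move: h; rewrite /u hnz => h.
      transitivity ((a*d - b*(n'%:Z * p%:Z * k)) + b*(n'%:Z * p%:Z * k)*(1 - (a*d - b*(n'%:Z * p%:Z * k)))); first ring.
      by rewrite h subrr mulr0 addr0.
    have [j [h0 [Hh0 Eg'']]] := (proj1 (Hcov g'') Gg'').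
    exists j, (M2 1 u 0 1 *m phi h0); split.
      apply: Gamma0_mul; last exact: phiG (G_pe _ Hh0).
      by apply/Gamma0_M2; split; [ring | exists 0; ring].
    rewrite -mulmxA -phiM -Eg'' /phi /g'' phiM2 // mulM2 Eg; congr M2; try ring.
    move: h; rewrite /u hnz => h.
    symmetry; transitivity (b * (a*d - b*(n'%:Z * p%:Z * k))); first ring.
    by rewrite h mulr1.
  + move=> [j [h [Hh ->]]].
    exact: Gamma0_mul (Gamma0_weak Hh) (phiG n (R j) (RG j)).
- move=> i j g [h1 [Hh1 E1]] [h2 [Hh2 E2]].
  pose q := invmx h2 *m h1.
  have Gq : Gamma0 (p ^ e * n) q := Gamma0_mul (Gamma0_inv Hh2) Hh1.
  have Eq : q *m phi (R i) = phi (R j).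
    by rewrite /q -mulmxA -E1 E2 mulKmx // (Gamma0_unit Hh2).
  pose k := R j *m invmx (R i).
  have Gk : Gamma0 (p * n) k := Gamma0_mul (RG j) (Gamma0_inv (RG i)).
  have Ek : k *m R i = R j by rewrite /k mulmxKV // (Gamma0_unit (RG i)).
  have Ui' : phi (R i) \in unitmx := Gamma0_unit (phiG _ _ (RG i)).
  have phik : phi k = q.
    by apply: (can_inj (mulmxK Ui')); rewrite /= -phiM Ek Eq.
  have Gk' : Gamma0 (p ^ e.+1 * n) k.
    move: Gk phik Gq => /Gamma0_ex [a [b [c [d [m [Ek' [hd hc]]]]]]].
    rewrite Ek' hc PoszM -mulrA /phi phiM2 // => <- /Gamma0_M2 [_ [m' hm']].
    apply/Gamma0_M2; split.
      by rewrite (mulrA p%:Z) -PoszM -hc.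
    exists m'; rewrite hm' expnS -mulnA !PoszM; ring.
  apply: (Hdisj i j (R j)); first by exists k.
  by exists 1%:M; split; [exact: Gamma0_1 | rewrite mul1mx].
Qed.
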